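(* Let $f\colon X\to X$ be a homeomorphism of a compact metric space $(X,d)$ with the shadowing property. For every $\epsilon>0$ there is $\delta>0$ such that: if $x\in\Omega(f)$, $y\in X$ and $n>0$ satisfy $\epsilon<\gamma:=\max\{d(f^k(x),f^k(y)):0\le k<n\}$ and $\max\{d(x,y),d(f^n(x),f^n(y))\}<\delta$, then there exist $N\ge1$ and a compact set $K\subset X$ with $\sup_{k\in\mathbb{Z}}\operatorname{diam}(f^k(K))\le2\gamma$, $f^N(K)=K$, and $f^N|_K$ semi-conjugate to the full shift on two symbols. In particular $K$ is uncountable and the topological entropy of $f^N|_K$ is at least $\log 2$.
   Context: Shadowing: for every $\varepsilon>0$ there is $\delta>0$ such that for every sequence $(x_k)_{k\in\mathbb{Z}}$ with $d(f(x_k),x_{k+1})<\delta$ for all $k$ there is $y$ with $d(f^k(y),x_k)<\varepsilon$ for all $k\in\mathbb{Z}$. $\Omega(f)$ is the set of non-wandering points: $x$ such that for every open $U\ni x$ there is $k>0$ with $f^k(U)\cap U\ne\emptyset$. $g\colon K\to K$ is semi-conjugate to the full shift $\sigma$ on $\{0,1\}^{\mathbb{Z}}$ if there is a continuous surjection $h\colon K\to\{0,1\}^{\mathbb{Z}}$ with $h\circ g=\sigma\circ h$. *)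

(* Defs.v *)
From Stdlib Require Import Reals Lra ZArith List.
Open Scope R_scope.

Definition is_metric {X : Type} (d : X -> X -> R) : Prop :=
  (forall x y, 0 <= d x y) /\
  (forall x y, d x y = 0 <-> x = y) /\
  (forall x y, d x y = d y x) /\
  (forall x y z, d x z <= d x y + d y z).

Definition is_open {X : Type} (d : X -> X -> R) (U : X -> Prop) : Prop :=
  forall x, U x -> exists r, 0 < r /\ forall y, d x y < r -> U y.

Definition compact_set {X : Type} (d : X -> X -> R) (K : X -> Prop) : Prop :=
  forall (I : Type) (U : I -> X -> Prop),
    (forall i, is_open d (U i)) ->
    (forall x, K x -> exists i, U i x) ->
    exists l : list I, forall x, K x -> exists i, In i l /\ U i x.

Definition compact_space {X : Type} (d : X -> X -> R) : Prop :=
  compact_set d (fun _ => True).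

Definition continuous {X : Type} (d : X -> X -> R) (f : X -> X) : Prop :=
  forall x eps, 0 < eps -> exists del, 0 < del /\
    forall y, d x y < del -> d (f x) (f y) < eps.

Definition homeo_with_inverse {X : Type} (d : X -> X -> R) (f g : X -> X) : Prop :=
  continuous d f /\ continuous d g /\
  (forall x, g (f x) = x) /\ (forall x, f (g x) = x).

(* integer iterates f^k, k in Z, where g = f^{-1} *)
Definition zpow {X : Type} (f g : X -> X) (k : Z) : X -> X :=
  match k with
  | Z0 => fun x => x
  | Zpos p => Nat.iter (Pos.to_nat p) f
  | Zneg p => Nat.iter (Pos.to_nat p) g
  end.

Definition shadowing {X : Type} (d : X -> X -> R) (f g : X -> X) : Prop :=
  forall eps, 0 < eps -> exists del, 0 < del /\
    forall xs : Z -> X,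
      (forall k, d (f (xs k)) (xs (k + 1)%Z) < del) ->
      exists y, forall k, d (zpow f g k y) (xs k) < eps.

Definition nonwandering {X : Type} (d : X -> X -> R) (f : X -> X) (x : X) : Prop :=
  forall U, is_open d U -> U x ->
    exists k : nat, (0 < k)%nat /\ exists z, U z /\ U (Nat.iter k f z).

Definition shift (s : Z -> bool) : Z -> bool := fun i => s (i + 1)%Z.

(* F|_K (with F(K)=K) is semi-conjugate to the full shift: continuous surjection
   h : K -> {0,1}^Z (product topology, i.e. each coordinate locally constant)
   with h o F = shift o h on K *)
Definition semiconj_full_shift {X : Type} (d : X -> X -> R) (F : X -> X)
  (K : X -> Prop) : Prop :=
  exists h : X -> Z -> bool,
    (forall w i, K w -> exists eta, 0 < eta /\
        forall w', K w' -> d w w' < eta -> h w' i = h w i) /\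
    (forall s : Z -> bool, exists w, K w /\ h w = s) /\
    (forall w, K w -> h (F w) = shift (h w)).

Definition uncountable_set {X : Type} (K : X -> Prop) : Prop :=
  ~ exists s : nat -> X, forall w, K w -> exists n, s n = w.

Definition separated {X : Type} (d : X -> X -> R) (F : X -> X) (K : X -> Prop)
  (n : nat) (eps : R) (E : list X) : Prop :=
  NoDup E /\ (forall a, In a E -> K a) /\
  forall a b, In a E -> In b E -> a <> b ->
    exists j, (j < n)%nat /\ eps < d (Nat.iter j F a) (Nat.iter j F b).

(* h_top(F|_K) >= c, with h_top(F|_K) = lim_{eps->0} limsup_n (1/n) log s(n,eps) *)
Definition entropy_ge {X : Type} (d : X -> X -> R) (F : X -> X) (K : X -> Prop)
  (c : R) : Prop :=
  forall c', c' < c -> exists eps, 0 < eps /\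
    forall n0 : nat, exists n : nat, (n0 <= n)%nat /\ (0 < n)%nat /\
      exists E, separated d F K n eps E /\ c' < ln (INR (length E)) / INR n.

(* Main.v *)
Require Import Defs.
From Stdlib Require Import Reals ZArith List Lia Lra Classical ClassicalEpsilon FunctionalExtensionality.
Open Scope R_scope.

Lemma d_self {X} (d : X -> X -> R) (Hd : is_metric d) x : d x x = 0.
Proof. destruct Hd as [_ [H _]]. apply H. reflexivity. Qed.
Lemma d_sym {X} (d : X -> X -> R) (Hd : is_metric d) x y : d x y = d y x.
Proof. destruct Hd as [_ [_ [H _]]]. apply H. Qed.
Lemma d_tri {X} (d : X -> X -> R) (Hd : is_metric d) x y z : d x z <= d x y + d y z.
Proof. destruct Hd as [_ [_ [_ H]]]. apply H. Qed.
Lemma d_pos {X} (d : X -> X -> R) (Hd : is_metric d) x y : 0 <= d x y.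
Proof. destruct Hd as [H _]. apply H. Qed.

Lemma ball_open {X} (d : X -> X -> R) (Hd : is_metric d) c r :
  is_open d (fun y => d c y < r).
Proof.
  intros b Hb. exists (r - d c b). split; [lra|].
  intros y Hy. pose proof (d_tri d Hd c b y). lra.
Qed.

Lemma cont_comp {X} (d : X -> X -> R) (F G : X -> X) :
  continuous d F -> continuous d G -> continuous d (fun x => F (G x)).
Proof.
  intros HF HG x e He. destruct (HF (G x) e He) as [d1 [Hd1 H1]].
  destruct (HG x d1 Hd1) as [d2 [Hd2 H2]]. exists d2. split; auto.
Qed.

Lemma cont_id {X} (d : X -> X -> R) : continuous d (fun x => x).
Proof. intros x e He. exists e. auto. Qed.

Lemma iter_cont {X} (d : X -> X -> R) (F : X -> X) :
  continuous d F -> forall m, continuous d (Nat.iter m F).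
Proof.
  intros HF m. induction m as [|m IH]; simpl.
  - apply cont_id.
  - apply (cont_comp d F (Nat.iter m F)); auto.
Qed.

Lemma zpow_form {X} (f g : X -> X) k u :
  zpow f g k u = Nat.iter (Z.to_nat k) f (Nat.iter (Z.to_nat (- k)) g u).
Proof. destruct k; simpl; reflexivity. Qed.

Lemma zpow_cont {X} (d : X -> X -> R) f g : homeo_with_inverse d f g ->
  forall k, continuous d (zpow f g k).
Proof.
  intros [Hf [Hg _]] k.
  assert (E : zpow f g k = fun u => Nat.iter (Z.to_nat k) f (Nat.iter (Z.to_nat (- k)) g u)).
  { apply functional_extensionality. intro u. apply zpow_form. }
  rewrite E. apply cont_comp; apply iter_cont; auto.
Qed.

Lemma zpow_nat {X} (f g : X -> X) m u : zpow f g (Z.of_nat m) u = Nat.iter m f u.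
Proof.
  rewrite zpow_form. rewrite Nat2Z.id.
  replace (Z.to_nat (- Z.of_nat m)) with 0%nat by lia. reflexivity.
Qed.

Lemma zpow_succ {X} (d : X -> X -> R) f g : homeo_with_inverse d f g ->
  forall k u, zpow f g (Z.succ k) u = f (zpow f g k u).
Proof.
  intros [_ [_ [Hgf Hfg]]] k u. rewrite !zpow_form.
  destruct (Z_le_gt_dec 0 k).
  - replace (Z.to_nat (Z.succ k)) with (S (Z.to_nat k)) by lia.
    replace (Z.to_nat (- Z.succ k)) with 0%nat by lia.
    replace (Z.to_nat (- k)) with 0%nat by lia. reflexivity.
  - replace (Z.to_nat (Z.succ k)) with 0%nat by lia.
    replace (Z.to_nat k) with 0%nat by lia.
    replace (Z.to_nat (- k)) with (S (Z.to_nat (- Z.succ k))) by lia.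
    simpl. rewrite Hfg. reflexivity.
Qed.

Lemma zpow_pred {X} (d : X -> X -> R) f g : homeo_with_inverse d f g ->
  forall k u, zpow f g (Z.pred k) u = g (zpow f g k u).
Proof.
  intros H k u. pose proof (zpow_succ d f g H (Z.pred k) u) as E.
  rewrite Z.succ_pred in E. rewrite E. destruct H as [_ [_ [Hgf _]]]. rewrite Hgf. reflexivity.
Qed.

Lemma zpow_add {X} (d : X -> X -> R) f g : homeo_with_inverse d f g ->
  forall a b u, zpow f g a (zpow f g b u) = zpow f g (a + b) u.
Proof.
  intros H a. induction a using Z.peano_ind; intros b u.
  - reflexivity.
  - rewrite zpow_succ with (d:=d) by auto. rewrite IHa.
    replace (Z.succ a + b)%Z with (Z.succ (a + b)) by lia.
    rewrite zpow_succ with (d:=d) by auto. reflexivity.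
  - rewrite zpow_pred with (d:=d) by auto. rewrite IHa.
    replace (Z.pred a + b)%Z with (Z.pred (a + b)) by lia.
    rewrite zpow_pred with (d:=d) by auto. reflexivity.
Qed.

Lemma finite_min (Q : nat -> R -> Prop) :
  (forall j t t', 0 < t' <= t -> Q j t -> Q j t') ->
  (forall j, exists t, 0 < t /\ Q j t) ->
  forall n, exists t, 0 < t /\ forall j, (j <= n)%nat -> Q j t.
Proof.
  intros Hm Hex n. induction n as [|n IH].
  - destruct (Hex 0%nat) as [t [Ht HQ]]. exists t. split; auto.
    intros j Hj. replace j with 0%nat by lia. auto.
  - destruct IH as [t1 [Ht1 H1]]. destruct (Hex (S n)) as [t2 [Ht2 H2]].
    exists (Rmin t1 t2). split. { apply Rmin_glb_lt; auto. }
    intros j Hj. destruct (Nat.eq_dec j (S n)) as [->|Hne].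
    + apply (Hm _ t2); auto. split; [apply Rmin_glb_lt; auto | apply Rmin_r].
    + apply (Hm _ t1); [split; [apply Rmin_glb_lt; auto | apply Rmin_l]|]. apply H1. lia.
Qed.

Lemma closed_compact {X} (d : X -> X -> R) (K : X -> Prop) :
  compact_space d -> is_open d (fun w => ~ K w) -> compact_set d K.
Proof.
  intros Hc Ho J U HU Hcov.
  destruct (Hc (option J) (fun o => match o with Some i => U i | None => fun w => ~ K w end))
    as [l Hl].
  - intros [i|]; auto.
  - intros w _. destruct (classic (K w)) as [Kw|nKw].
    + destruct (Hcov w Kw) as [i Hi]. exists (Some i). auto.
    + exists None. auto.
  - exists (flat_map (fun o => match o with Some i => i :: nil | None => nil end) l).
    intros w Kw. destruct (Hl w Logic.I) as [[i|] [Hin Hu]].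
    + exists i. split; auto. apply in_flat_map. exists (Some i). simpl. auto.
    + contradiction.
Qed.

Lemma unif_cont {X} (d : X -> X -> R) (Hd : is_metric d) (F : X -> X) :
  compact_space d -> continuous d F ->
  forall e, 0 < e -> exists del, 0 < del /\ forall a b, d a b < del -> d (F a) (F b) < e.
Proof.
  intros Hc HF e He.
  set (I := {p : X * R | 0 < snd p /\ forall y, d (fst p) y < 2 * snd p -> d (F (fst p)) (F y) < e / 2}).
  destruct (Hc I (fun p => fun y => d (fst (proj1_sig p)) y < snd (proj1_sig p))) as [l Hl].
  - intros p. apply ball_open; auto.
  - intros b _. destruct (HF b (e/2)) as [t [Ht Htt]]; [lra|].
    assert (Hp : 0 < snd (b, t/2) /\ forall y, d (fst (b, t/2)) y < 2 * snd (b, t/2) -> d (F (fst (b, t/2))) (F y) < e / 2).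
    { simpl. split; [lra|]. intros y Hy. apply Htt. lra. }
    exists (exist _ (b, t/2) Hp). simpl. rewrite (d_self d Hd). lra.
  - assert (Hmin : exists m, 0 < m /\ forall p, In p l -> m <= snd (proj1_sig p)).
    { clear Hl. induction l as [|p l IH].
      - exists 1. split; [lra|]. intros p []. 
      - destruct IH as [m [Hm Hm']]. exists (Rmin m (snd (proj1_sig p))).
        split. { apply Rmin_glb_lt; auto. destruct (proj2_sig p); auto. }
        intros q [<-|Hq]. apply Rmin_r. eapply Rle_trans; [apply Rmin_l|auto]. }
    destruct Hmin as [m [Hm Hm']]. exists m. split; auto.
    intros a b Hab. destruct (Hl a Logic.I) as [p [Hin Hp]].
    destruct p as [[c r] [Hr Hcr]]. simpl in *. pose proof (Hm' _ Hin). simpl in H.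
    assert (d (F c) (F a) < e/2) by (apply Hcr; lra).
    assert (d (F c) (F b) < e/2).
    { apply Hcr. pose proof (d_tri d Hd c a b). lra. }
    pose proof (d_tri d Hd (F a) (F c) (F b)). rewrite (d_sym d Hd (F a) (F c)) in H2. lra.
Qed.
Lemma iter_periodic {X} (f : X -> X) k x : Nat.iter k f x = x ->
  forall q, Nat.iter (q * k) f x = x.
Proof.
  intros Hk q. induction q as [|q IH]; simpl; auto.
  rewrite Nat.iter_add, IH. auto.
Qed.

Lemma return_lemma {X} (d : X -> X -> R) (Hd : is_metric d) f x n :
  continuous d f -> nonwandering d f x -> (1 <= n)%nat ->
  forall eta, 0 < eta -> exists z m, (n <= m)%nat /\ d x z < eta /\ d x (Nat.iter m f z) < eta.
Proof.
  intros Hf Hnw Hn eta Heta.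
  destruct (classic (exists k, (1 <= k < n)%nat /\ Nat.iter k f x = x)) as [[k [Hk Hkx]]|Hno].
  - exists x, (n * k)%nat. split; [nia|]. rewrite (iter_periodic f k x Hkx n).
    rewrite (d_self d Hd). lra.
  - set (Q := fun k t => (1 <= k < n)%nat -> forall a, d x a < t -> t <= d x (Nat.iter k f a)).
    assert (Hm : forall j t t', 0 < t' <= t -> Q j t -> Q j t').
    { unfold Q. intros j t t' Ht HQ Hj a Ha. specialize (HQ Hj a ltac:(lra)). lra. }
    assert (Hex : forall j, exists t, 0 < t /\ Q j t).
    { intro j. destruct (classic ((1 <= j < n)%nat)) as [Hj|Hj].
      - assert (Hne : Nat.iter j f x <> x) by (intro E; apply Hno; eauto).
        set (c := d x (Nat.iter j f x)).
        assert (Hc : 0 < c).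
        { destruct (d_pos d Hd x (Nat.iter j f x)) as [?|E]; auto.
          exfalso. apply Hne. destruct Hd as [_ [H _]]. symmetry. apply H. unfold c in E. auto. }
        destruct (iter_cont d f Hf j x (c/2) ltac:(lra)) as [t [Ht Htt]].
        exists (Rmin t (c/2)). split; [apply Rmin_glb_lt; lra|].
        intros _ a Ha. pose proof (Rmin_l t (c/2)). pose proof (Rmin_r t (c/2)).
        specialize (Htt a ltac:(lra)).
        pose proof (d_tri d Hd x (Nat.iter j f a) (Nat.iter j f x)).
        rewrite (d_sym d Hd (Nat.iter j f a) (Nat.iter j f x)) in H1. fold c in H1. lra.
      - exists 1. split; [lra|]. intro; contradiction. }
    destruct (finite_min Q Hm Hex n) as [t [Ht HQ]].
    destruct (Hnw (fun y => d x y < Rmin t eta)) as [k [Hk [z [Hz Hkz]]]].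
    { apply ball_open; auto. }
    { rewrite (d_self d Hd). apply Rmin_glb_lt; auto. }
    pose proof (Rmin_l t eta). pose proof (Rmin_r t eta).
    exists z, k. split; [|split; lra].
    destruct (le_lt_dec n k) as [?|Hlt]; auto. exfalso.
    specialize (HQ k ltac:(lia) ltac:(lia) z ltac:(lra)). lra.
Qed.
Fixpoint all_lists (m : nat) : list (list bool) :=
  match m with
  | O => nil :: nil
  | S m => map (cons true) (all_lists m) ++ map (cons false) (all_lists m)
  end.

Lemma all_lists_len m t : In t (all_lists m) -> length t = m.
Proof.
  revert t. induction m as [|m IH]; simpl; intros t Ht.
  - destruct Ht as [<-|[]]. reflexivity.
  - apply in_app_or in Ht. destruct Ht as [Ht|Ht]; apply in_map_iff in Ht;
      destruct Ht as [t' [<- Ht']]; simpl; rewrite IH; auto.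
Qed.

Lemma all_lists_length m : length (all_lists m) = (2 ^ m)%nat.
Proof. induction m; simpl; auto. rewrite length_app, !length_map, IHm. lia. Qed.

Lemma all_lists_nodup m : NoDup (all_lists m).
Proof.
  induction m as [|m IH]; simpl.
  - constructor; [intros []|constructor].
  - apply NoDup_app.
    + apply NoDup_map_NoDup_ForallPairs; auto. intros a b _ _ E. inversion E; auto.
    + apply NoDup_map_NoDup_ForallPairs; auto. intros a b _ _ E. inversion E; auto.
    + intros a H1 H2. apply in_map_iff in H1. apply in_map_iff in H2.
      destruct H1 as [? [<- _]]. destruct H2 as [? [E _]]. discriminate.
Qed.

Definition ext (t : list bool) (i : Z) : bool := nth (Z.to_nat i) t false.

Lemma open_gt {X} (d : X -> X -> R) (Hd : is_metric d) (F : X -> X) c b :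
  continuous d F -> is_open d (fun w => b < d (F w) c).
Proof.
  intros HF w Hw. destruct (HF w (d (F w) c - b)) as [r [Hr H]]; [lra|].
  exists r. split; auto. intros w' Hw'. specialize (H w' Hw').
  pose proof (d_tri d Hd (F w) (F w') c). lra.
Qed.

Section Constr.
Context {X : Type} (d : X -> X -> R) (f g : X -> X).
Hypothesis Hd : is_metric d.
Hypothesis Hf : homeo_with_inverse d f g.
Context (x y z : X) (n P j0 : nat) (beta gam del eta ds : R).
Hypothesis Hn : (1 <= n)%nat.
Hypothesis HnP : (n <= P)%nat.
Hypothesis Hj0 : (j0 < n)%nat.
Hypothesis Hgam : forall j, (j < n)%nat -> d (Nat.iter j f x) (Nat.iter j f y) <= gam.
Hypothesis Hgam0 : d (Nat.iter j0 f x) (Nat.iter j0 f y) = gam.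
Hypothesis Hb : 0 < beta.
Hypothesis Hbg : 2 * beta < gam.
Hypothesis Hxy : d x y < del.
Hypothesis Hnxy : d (Nat.iter n f x) (Nat.iter n f y) < del.
Hypothesis Hz1 : d x (Nat.iter P f z) < eta.
Hypothesis Hz2 : d (Nat.iter n f x) (Nat.iter n f z) < eta.
Hypothesis Hdel : 2 * del + 2 * eta < ds.
Hypothesis Hsh : forall xs : Z -> X, (forall k, d (f (xs k)) (xs (k + 1)%Z) < ds) ->
  exists w, forall k, d (zpow f g k w) (xs k) < beta.

Definition Pz := Z.of_nat P.
Definition u (b : bool) := if b then x else y.
Definition sig (s : Z -> bool) (i : Z) (j : nat) := if Nat.ltb j n then u (s i) else z.
Definition jn (k : Z) := Z.to_nat (k mod Pz).
Definition xs (s : Z -> bool) (k : Z) := Nat.iter (jn k) f (sig s (k / Pz) (jn k)).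

Lemma Pz_pos : (0 < Pz)%Z.
Proof. unfold Pz. lia. Qed.

Lemma decomp k : k = ((k / Pz) * Pz + Z.of_nat (jn k))%Z /\ (jn k < P)%nat.
Proof.
  pose proof Pz_pos. pose proof (Z.mod_pos_bound k Pz H). pose proof (Z_div_mod_eq_full k Pz).
  unfold jn. split; [rewrite Z2Nat.id by lia; lia|]. unfold Pz in *. lia.
Qed.

Lemma div_of i j : (j < P)%nat -> ((i * Pz + Z.of_nat j) / Pz = i)%Z /\ jn (i * Pz + Z.of_nat j) = j.
Proof.
  intros Hj. pose proof Pz_pos. split.
  - symmetry. apply (Z.div_unique _ _ _ (Z.of_nat j)); unfold Pz in *; lia.
  - unfold jn. rewrite <- (Z.mod_unique (i * Pz + Z.of_nat j) Pz i (Z.of_nat j)); unfold Pz in *; lia.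
Qed.

Lemma xs_eq s i j : (j < P)%nat -> xs s (i * Pz + Z.of_nat j)%Z = Nat.iter j f (sig s i j).
Proof. intros Hj. destruct (div_of i j Hj) as [E1 E2]. unfold xs. rewrite E1, E2. reflexivity. Qed.

Lemma del_pos : 0 < del.
Proof. pose proof (d_pos d Hd x y). lra. Qed.
Lemma eta_pos : 0 < eta.
Proof. pose proof (d_pos d Hd x (Nat.iter P f z)). lra. Qed.

Lemma Hux b : d x (u b) < del.
Proof. destruct b; simpl; auto. rewrite (d_self d Hd). apply del_pos. Qed.
Lemma Hunx b : d (Nat.iter n f (u b)) (Nat.iter n f x) < del.
Proof. destruct b; simpl. rewrite (d_self d Hd). apply del_pos. rewrite (d_sym d Hd). auto. Qed.

Lemma pseudo s : forall k, d (f (xs s k)) (xs s (k + 1)%Z) < ds.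
Proof.
  intro k. destruct (decomp k) as [Ek Hj]. rewrite Ek. revert Hj.
  generalize (jn k) as j. generalize (k / Pz)%Z as i. intros i j Hj. pose proof del_pos. pose proof eta_pos.
  destruct (Nat.eq_dec (S j) P) as [HjP|HjP].
  - replace ((i * Pz + Z.of_nat j) + 1)%Z with ((i + 1) * Pz + Z.of_nat 0)%Z
      by (unfold Pz; lia).
    rewrite !xs_eq by lia. change (f (Nat.iter j f (sig s i j))) with (Nat.iter (S j) f (sig s i j)).
    rewrite HjP. simpl Nat.iter at 2. unfold sig.
    replace (Nat.ltb 0 n) with true by (symmetry; apply Nat.ltb_lt; lia).
    destruct (Nat.ltb j n) eqn:Ejn.
    + apply Nat.ltb_lt in Ejn. assert (HP : P = n) by lia. pose proof Hz1 as Hz1'. rewrite HP in Hz1' |- *.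
      pose proof (d_tri d Hd (Nat.iter n f (u (s i))) (Nat.iter n f x) (u (s (i+1)%Z))).
      pose proof (d_tri d Hd (Nat.iter n f x) (Nat.iter n f z) (u (s (i+1)%Z))).
      pose proof (d_tri d Hd (Nat.iter n f z) x (u (s (i+1)%Z))).
      pose proof (Hunx (s i)). pose proof (Hux (s (i+1)%Z)).
      rewrite (d_sym d Hd _ x) in H3. lra.
    + pose proof (d_tri d Hd (Nat.iter P f z) x (u (s (i+1)%Z))).
      pose proof (Hux (s (i+1)%Z)). rewrite (d_sym d Hd _ x) in H1. lra.
  - replace ((i * Pz + Z.of_nat j) + 1)%Z with (i * Pz + Z.of_nat (S j))%Z by lia.
    rewrite !xs_eq by lia. change (f (Nat.iter j f (sig s i j))) with (Nat.iter (S j) f (sig s i j)).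
    unfold sig. destruct (Nat.ltb j n) eqn:E1; destruct (Nat.ltb (S j) n) eqn:E2;
      try (rewrite (d_self d Hd); lra).
    + apply Nat.ltb_lt in E1. apply Nat.ltb_ge in E2. assert (S j = n) by lia. rewrite H1.
      pose proof (d_tri d Hd (Nat.iter n f (u (s i))) (Nat.iter n f x) (Nat.iter n f z)).
      pose proof (Hunx (s i)). lra.
    + apply Nat.ltb_ge in E1. apply Nat.ltb_lt in E2. lia.
Qed.

Definition K (w : X) : Prop :=
  (forall (i : Z) (j : nat), (n <= j < P)%nat -> d (zpow f g (i * Pz + Z.of_nat j) w) (Nat.iter j f z) <= beta) /\
  (forall i : Z, (forall j, (j < n)%nat -> d (zpow f g (i * Pz + Z.of_nat j) w) (Nat.iter j f x) <= beta) \/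
                 (forall j, (j < n)%nat -> d (zpow f g (i * Pz + Z.of_nat j) w) (Nat.iter j f y) <= beta)).

Lemma K_shadow s w : (forall k, d (zpow f g k w) (xs s k) < beta) -> K w.
Proof.
  intros Hw. split.
  - intros i j Hj. specialize (Hw (i * Pz + Z.of_nat j)%Z). rewrite xs_eq in Hw by lia.
    unfold sig in Hw. replace (Nat.ltb j n) with false in Hw by (symmetry; apply Nat.ltb_ge; lia). lra.
  - intro i. destruct (s i) eqn:Es; [left|right]; intros j Hj;
      specialize (Hw (i * Pz + Z.of_nat j)%Z); rewrite xs_eq in Hw by lia;
      unfold sig in Hw; replace (Nat.ltb j n) with true in Hw by (symmetry; apply Nat.ltb_lt; lia);
      rewrite Es in Hw; simpl in Hw; lra.
Qed.

Definition hh (w : X) (i : Z) : bool :=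
  if Rlt_dec (d (zpow f g (i * Pz + Z.of_nat j0) w) (Nat.iter j0 f x))
             (d (zpow f g (i * Pz + Z.of_nat j0) w) (Nat.iter j0 f y)) then true else false.

Definition A w i := d (zpow f g (i * Pz + Z.of_nat j0) w) (Nat.iter j0 f x) <= beta.
Definition B w i := d (zpow f g (i * Pz + Z.of_nat j0) w) (Nat.iter j0 f y) <= beta.

Lemma K_AB w i : K w -> A w i \/ B w i.
Proof. intros [_ H]. destruct (H i) as [H1|H1]; [left|right]; apply H1; auto. Qed.

Lemma A_h w i : A w i -> hh w i = true.
Proof.
  unfold A, hh. intro H. set (p := zpow f g (i * Pz + Z.of_nat j0) w) in *.
  pose proof (d_tri d Hd (Nat.iter j0 f x) p (Nat.iter j0 f y)). rewrite (d_sym d Hd _ p) in H0.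
  destruct (Rlt_dec _ _); auto. lra.
Qed.

Lemma B_h w i : B w i -> hh w i = false.
Proof.
  unfold B, hh. intro H. set (p := zpow f g (i * Pz + Z.of_nat j0) w) in *.
  pose proof (d_tri d Hd (Nat.iter j0 f x) p (Nat.iter j0 f y)). rewrite (d_sym d Hd _ p) in H0.
  destruct (Rlt_dec _ _); auto. lra.
Qed.

Lemma sep a b i : K a -> K b -> hh a i <> hh b i ->
  gam - 2 * beta <= d (zpow f g (i * Pz + Z.of_nat j0) a) (zpow f g (i * Pz + Z.of_nat j0) b).
Proof.
  intros Ka Kb Hne. set (pa := zpow f g (i * Pz + Z.of_nat j0) a).
  set (pb := zpow f g (i * Pz + Z.of_nat j0) b).
  destruct (K_AB a i Ka) as [Aa|Ba]; destruct (K_AB b i Kb) as [Ab|Bb].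
  - rewrite (A_h _ _ Aa), (A_h _ _ Ab) in Hne. congruence.
  - unfold A, B in *. fold pa in Aa. fold pb in Bb.
    pose proof (d_tri d Hd (Nat.iter j0 f x) pa (Nat.iter j0 f y)).
    pose proof (d_tri d Hd pa pb (Nat.iter j0 f y)).
    rewrite (d_sym d Hd _ pa) in H. lra.
  - unfold A, B in *. fold pa in Ba. fold pb in Ab.
    pose proof (d_tri d Hd (Nat.iter j0 f x) pb (Nat.iter j0 f y)).
    pose proof (d_tri d Hd pb pa (Nat.iter j0 f y)).
    rewrite (d_sym d Hd _ pb) in H. rewrite (d_sym d Hd pb pa) in H0. lra.
  - rewrite (B_h _ _ Ba), (B_h _ _ Bb) in Hne. congruence.
Qed.

Lemma K_shift w e : K w -> K (zpow f g (e * Pz) w).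
Proof.
  intros [H1 H2]. split.
  - intros i j Hj. rewrite (zpow_add d f g Hf).
    replace (i * Pz + Z.of_nat j + e * Pz)%Z with ((i + e) * Pz + Z.of_nat j)%Z by lia. auto.
  - intro i. destruct (H2 (i + e)%Z) as [H|H]; [left|right]; intros j Hj;
      rewrite (zpow_add d f g Hf);
      replace (i * Pz + Z.of_nat j + e * Pz)%Z with ((i + e) * Pz + Z.of_nat j)%Z by lia; auto.
Qed.

Lemma hh_shift w e i : hh (zpow f g (e * Pz) w) i = hh w (i + e).
Proof.
  unfold hh. rewrite (zpow_add d f g Hf).
  replace (i * Pz + Z.of_nat j0 + e * Pz)%Z with ((i + e) * Pz + Z.of_nat j0)%Z by lia. reflexivity.
Qed.

Lemma hh_shadow s w : (forall k, d (zpow f g k w) (xs s k) < beta) -> hh w = s.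
Proof.
  intros Hw. apply functional_extensionality. intro i.
  specialize (Hw (i * Pz + Z.of_nat j0)%Z). rewrite xs_eq in Hw by lia.
  unfold sig in Hw. replace (Nat.ltb j0 n) with true in Hw by (symmetry; apply Nat.ltb_lt; lia).
  destruct (s i); simpl in Hw; [apply A_h | apply B_h]; unfold A, B; lra.
Qed.

Lemma surj s : exists w, K w /\ hh w = s.
Proof.
  destruct (Hsh (xs s) (pseudo s)) as [w Hw]. exists w. split.
  - apply (K_shadow s w Hw).
  - apply (hh_shadow s w Hw).
Qed.

Lemma diam k a b : K a -> K b -> d (zpow f g k a) (zpow f g k b) <= 2 * gam.
Proof.
  intros [Ka1 Ka2] [Kb1 Kb2]. destruct (decomp k) as [Ek Hj]. rewrite Ek. revert Hj.
  generalize (jn k) as j. generalize (k / Pz)%Z as i. intros i j Hj.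
  set (pa := zpow f g (i * Pz + Z.of_nat j) a). set (pb := zpow f g (i * Pz + Z.of_nat j) b).
  destruct (le_lt_dec n j) as [Hnj|Hnj].
  - pose proof (Ka1 i j ltac:(lia)). pose proof (Kb1 i j ltac:(lia)). fold pa pb in H, H0.
    pose proof (d_tri d Hd pa (Nat.iter j f z) pb). rewrite (d_sym d Hd (Nat.iter j f z) pb) in H1. lra.
  - assert (Hxx : forall p q c c', d p c <= beta -> d q c' <= beta -> d c c' <= gam -> d p q <= 2 * gam).
    { intros p q c c' H1 H2 H3. pose proof (d_tri d Hd p c q). pose proof (d_tri d Hd c c' q).
      rewrite (d_sym d Hd c' q) in H0. lra. }
    assert (gx : 0 <= gam) by lra.
    destruct (Ka2 i) as [Ha|Ha]; destruct (Kb2 i) as [Hb'|Hb']; specialize (Ha j Hnj); specialize (Hb' j Hnj);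
      fold pa in Ha; fold pb in Hb'.
    + apply (Hxx _ _ _ _ Ha Hb'). rewrite (d_self d Hd); lra.
    + apply (Hxx _ _ _ _ Ha Hb'). apply Hgam; auto.
    + apply (Hxx _ _ _ _ Ha Hb'). rewrite (d_sym d Hd). apply Hgam; auto.
    + apply (Hxx _ _ _ _ Ha Hb'). rewrite (d_self d Hd); lra.
Qed.

Lemma K_closed : is_open d (fun w => ~ K w).
Proof.
  intros w Hw. unfold K in Hw. apply not_and_or in Hw. destruct Hw as [Hw|Hw].
  - apply not_all_ex_not in Hw. destruct Hw as [i Hw]. apply not_all_ex_not in Hw. destruct Hw as [j Hw].
    apply imply_to_and in Hw. destruct Hw as [Hj Hw]. apply Rnot_le_lt in Hw.
    destruct (open_gt d Hd (zpow f g (i * Pz + Z.of_nat j)) (Nat.iter j f z) beta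
      (zpow_cont d f g Hf _) w Hw) as [r [Hr Hr']].
    exists r. split; auto. intros w' Hw' [K1 _]. specialize (Hr' w' Hw'). specialize (K1 i j Hj). lra.
  - apply not_all_ex_not in Hw. destruct Hw as [i Hw]. apply not_or_and in Hw. destruct Hw as [H1 H2].
    apply not_all_ex_not in H1. destruct H1 as [j1 H1]. apply imply_to_and in H1. destruct H1 as [Hj1 H1].
    apply not_all_ex_not in H2. destruct H2 as [j2 H2]. apply imply_to_and in H2. destruct H2 as [Hj2 H2].
    apply Rnot_le_lt in H1. apply Rnot_le_lt in H2.
    destruct (open_gt d Hd (zpow f g (i * Pz + Z.of_nat j1)) (Nat.iter j1 f x) beta
      (zpow_cont d f g Hf _) w H1) as [r1 [Hr1 Hr1']].
    destruct (open_gt d Hd (zpow f g (i * Pz + Z.of_nat j2)) (Nat.iter j2 f y) beta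
      (zpow_cont d f g Hf _) w H2) as [r2 [Hr2 Hr2']].
    exists (Rmin r1 r2). split; [apply Rmin_glb_lt; auto|]. intros w' Hw' [_ K2].
    pose proof (Rmin_l r1 r2). pose proof (Rmin_r r1 r2).
    specialize (Hr1' w' ltac:(lra)). specialize (Hr2' w' ltac:(lra)).
    destruct (K2 i) as [K3|K3]; [specialize (K3 j1 Hj1)|specialize (K3 j2 Hj2)]; lra.
Qed.

Lemma iterF m w : Nat.iter m (Nat.iter P f) w = zpow f g (Z.of_nat m * Pz) w.
Proof.
  induction m as [|m IH]; [reflexivity|].
  rewrite Nat.iter_succ, IH, <- (zpow_nat f g P), (zpow_add d f g Hf). f_equal. unfold Pz. lia.
Qed.

Lemma K_F w : K w -> K (Nat.iter P f w).
Proof. intro Kw. rewrite <- (zpow_nat f g P). replace (Z.of_nat P) with (1 * Pz)%Z by (unfold Pz; lia). apply K_shift; auto. Qed.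

Lemma uncount : uncountable_set K.
Proof.
  intros [e He]. destruct (surj (fun i => negb (hh (e (Z.to_nat i)) i))) as [w [Kw Hw]].
  destruct (He w Kw) as [m Hm]. assert (E := f_equal (fun h => h (Z.of_nat m)) Hw). simpl in E.
  rewrite Nat2Z.id, Hm in E. destruct (hh w (Z.of_nat m)); discriminate.
Qed.

Hypothesis Hc : compact_space d.

Lemma entropy : entropy_ge d (Nat.iter P f) K (ln 2).
Proof.
  intros c' Hc'.
  destruct (unif_cont d Hd (Nat.iter j0 f) Hc (iter_cont d f (proj1 Hf) j0) (gam - 2 * beta)) as [du [Hdu Hdu']];
    [lra|].
  assert (Hsep : forall a b, K a -> K b -> hh a 0 <> hh b 0 -> du <= d a b).
  { intros a b Ka Kb Hne. pose proof (sep a b 0 Ka Kb Hne). simpl in H. rewrite !zpow_nat in H.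
    destruct (Rle_lt_dec du (d a b)) as [?|Hlt]; auto. specialize (Hdu' a b Hlt). lra. }
  exists (du / 2). split; [lra|]. intro n0.
  set (nn := Nat.max n0 1). exists nn. split; [lia|]. split; [lia|].
  set (pick := fun t => proj1_sig (constructive_indefinite_description _ (surj (ext t)))).
  assert (Hpick : forall t, K (pick t) /\ hh (pick t) = ext t).
  { intro t. unfold pick. destruct (constructive_indefinite_description _ _). simpl. auto. }
  assert (Hinj : forall t t', In t (all_lists nn) -> In t' (all_lists nn) -> pick t = pick t' -> t = t').
  { intros t t' Ht Ht' E. pose proof (proj2 (Hpick t)) as E1. pose proof (proj2 (Hpick t')) as E2.
    rewrite E in E1. rewrite E1 in E2. apply (nth_ext _ _ false false).
    - rewrite (all_lists_len _ _ Ht), (all_lists_len _ _ Ht'). reflexivity.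
    - intros k _. assert (E3 := f_equal (fun h => h (Z.of_nat k)) E2). simpl in E3. unfold ext in E3.
      rewrite Nat2Z.id in E3. auto. }
  exists (map pick (all_lists nn)). split.
  - split; [|split].
    + apply NoDup_map_NoDup_ForallPairs; [|apply all_lists_nodup]. intros a b Ha Hbb. apply Hinj; auto.
    + intros a Ha. apply in_map_iff in Ha. destruct Ha as [t [<- _]]. apply Hpick.
    + intros a b Ha Hbb Hab. apply in_map_iff in Ha. destruct Ha as [t [<- Ht]].
      apply in_map_iff in Hbb. destruct Hbb as [t' [<- Ht']].
      assert (Htt : t <> t') by (intro; subst; auto).
      assert (Hk : exists k, (k < nn)%nat /\ nth k t false <> nth k t' false).
      { apply NNPP. intro Hno. apply Htt. apply (nth_ext _ _ false false).
        - rewrite (all_lists_len _ _ Ht), (all_lists_len _ _ Ht'). reflexivity.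
        - intros k Hk. rewrite (all_lists_len _ _ Ht) in Hk. apply NNPP. intro Hk'. apply Hno. eauto. }
      destruct Hk as [k [Hk Hne]]. exists k. split; auto.
      destruct (Hpick t) as [Kt Ht1]. destruct (Hpick t') as [Kt' Ht1'].
      assert (Hsh' : forall w, K w -> hh (Nat.iter k (Nat.iter P f) w) 0 = hh w (Z.of_nat k)).
      { intros w Kw. rewrite iterF. rewrite hh_shift. reflexivity. }
      assert (HK : forall w, K w -> K (Nat.iter k (Nat.iter P f) w)).
      { intros w Kw. rewrite iterF. apply K_shift; auto. }
      assert (du <= d (Nat.iter k (Nat.iter P f) (pick t)) (Nat.iter k (Nat.iter P f) (pick t'))).
      { apply Hsep; auto. rewrite !Hsh', Ht1, Ht1' by auto. unfold ext. rewrite Nat2Z.id. auto. }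
      lra.
  - rewrite length_map, all_lists_length, pow_INR.
    replace (INR 2) with 2 by (simpl; lra). rewrite ln_pow by lra.
    assert (0 < INR nn) by (apply lt_0_INR; lia). field_simplify; [lra|lra].
Qed.

Lemma final : exists (N : nat) (K0 : X -> Prop),
        (1 <= N)%nat /\
        compact_set d K0 /\
        (forall k : Z, forall a b, K0 a -> K0 b ->
            d (zpow f g k a) (zpow f g k b) <= 2 * gam) /\
        (forall v, K0 v <-> exists w, K0 w /\ Nat.iter N f w = v) /\
        semiconj_full_shift d (Nat.iter N f) K0 /\
        uncountable_set K0 /\
        entropy_ge d (Nat.iter N f) K0 (ln 2).
Proof.
  exists P, K. split; [lia|]. split; [apply closed_compact; auto; apply K_closed|].
  split; [apply diam|]. split; [|split; [|split; [apply uncount|apply entropy]]].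
  - intro v. split.
    + intro Kv. exists (zpow f g (-1 * Pz) v). split; [apply K_shift; auto|].
      rewrite <- (zpow_nat f g P), (zpow_add d f g Hf). unfold Pz.
      replace (Z.of_nat P + -1 * Z.of_nat P)%Z with 0%Z by lia. reflexivity.
    + intros [w [Kw <-]]. apply K_F; auto.
  - exists hh. split; [|split; [apply surj|]].
    + intros w i Kw. destruct (zpow_cont d f g Hf (i * Pz + Z.of_nat j0) w (gam - 2 * beta)) as [r [Hr Hr']];
        [lra|]. exists r. split; auto. intros w' Kw' Hww'.
      destruct (Bool.bool_dec (hh w' i) (hh w i)) as [?|Hne]; auto. exfalso.
      pose proof (sep w w' i Kw Kw' (fun E => Hne (eq_sym E))). specialize (Hr' w' Hww'). lra.
    + intros w Kw. apply functional_extensionality. intro i. unfold shift.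
      rewrite <- (zpow_nat f g P). replace (Z.of_nat P) with (1 * Pz)%Z by (unfold Pz; lia).
      rewrite hh_shift. reflexivity.
Qed.

End Constr.
Theorem mainTheorem11 (X : Type) (d : X -> X -> R) (f g : X -> X)
  (Hd : is_metric d) (Hc : compact_space d) (Hf : homeo_with_inverse d f g)
  (Hsh : shadowing d f g) :
  forall eps, 0 < eps -> exists del, 0 < del /\
    forall (x y : X) (n : nat) (gamma : R),
      nonwandering d f x -> (0 < n)%nat ->
      (forall k, (k < n)%nat -> d (Nat.iter k f x) (Nat.iter k f y) <= gamma) ->
      (exists k, (k < n)%nat /\ d (Nat.iter k f x) (Nat.iter k f y) = gamma) ->
      eps < gamma ->
      d x y < del -> d (Nat.iter n f x) (Nat.iter n f y) < del ->
      exists (N : nat) (K : X -> Prop),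
        (1 <= N)%nat /\
        compact_set d K /\
        (forall k : Z, forall a b, K a -> K b ->
            d (zpow f g k a) (zpow f g k b) <= 2 * gamma) /\
        (forall z, K z <-> exists w, K w /\ Nat.iter N f w = z) /\
        semiconj_full_shift d (Nat.iter N f) K /\
        uncountable_set K /\
        entropy_ge d (Nat.iter N f) K (ln 2).
Proof.
  intros eps Heps. destruct (Hsh (eps / 2)) as [ds [Hds Hsh']]; [lra|].
  exists (ds / 4). split; [lra|].
  intros x y n gamma Hnw Hn Hle [j0 [Hj0 Hg0]] Hepsg Hxy Hnxy.
  destruct (iter_cont d f (proj1 Hf) n x (ds / 8)) as [th [Hth Hth']]; [lra|].
  destruct (return_lemma d Hd f x n (proj1 Hf) Hnw Hn (Rmin th (ds / 8))) as [z [m [Hm [Hz1 Hz2]]]].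
  { apply Rmin_glb_lt; lra. }
  pose proof (Rmin_l th (ds / 8)). pose proof (Rmin_r th (ds / 8)).
  apply (final d f g Hd Hf x y z n m j0 (eps / 2) gamma (ds / 4) (ds / 8) ds); auto; try lia; try lra.
  apply Hth'. lra.
Qed.
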